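(* Let $P\neq Q$ be points in $\mathbb{R}^3$ and let $\gamma:[0,T)\times[0,1]\to\mathbb{R}^3$ be a sufficiently smooth family of curves with $|\gamma_u|_g\neq0$ everywhere, $\gamma(0,\cdot)$ a regular horizontal curve from $P$ to $Q$, $\gamma(t,0)=P$, $\gamma(t,1)=Q$ for all $t$, and $$\gamma_t(t,u)=\vec k_g(t,u)+\lambda(t)N(t,u)-\Big(\int_0^u(k(t,\xi)+\lambda(t))|\gamma_u(t,\xi)|_gd\xi\Big)X_3(\gamma(t,u))$$ for $(t,u)\in(0,T)\times(0,1)$, where $\lambda(t)=-\frac{\int_0^1k(t,u)|\gamma_u(t,u)|_gdu}{L(\gamma(t))}$. Then $t\mapsto L(\gamma(t))$ is nonincreasing.
   Context: Write $\gamma=(\gamma^1,\gamma^2,\gamma^3)^t$. $|\gamma_u|_g=\sqrt{(\gamma^1_u)^2+(\gamma^2_u)^2}$ and $L(\gamma)=\int_0^1|\gamma_u|_gdu$. A curve is horizontal if $\gamma^3_u=-\tfrac12\gamma^2\gamma^1_u+\tfrac12\gamma^1\gamma^2_u$. $X_3=(0,0,1)^t$. $k=\frac{\gamma^2_{uu}\gamma^1_u-\gamma^2_u\gamma^1_{uu}}{((\gamma^1_u)^2+(\gamma^2_u)^2)^{3/2}}$, $N=\frac1{|\gamma_u|_g}\big(-\gamma^2_u,\ \gamma^1_u,\ \tfrac12\gamma^2\gamma^2_u+\tfrac12\gamma^1\gamma^1_u\big)^t$, and $\vec k_g=kN$. *)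

(* Defs.v *)
From Stdlib Require Import Reals.
From Coquelicot Require Import Coquelicot.
Open Scope R_scope.

(* Points of R^3 as triples; a family of curves is gamma : R -> R -> R^3,
   gamma t u with t the time and u in [0,1] the curve parameter. *)
Definition pt3 := (R * R * R)%type.
Definition c1 (x : pt3) : R := fst (fst x).
Definition c2 (x : pt3) : R := snd (fst x).
Definition c3 (x : pt3) : R := snd x.

Definition vadd (x y : pt3) : pt3 := (c1 x + c1 y, c2 x + c2 y, c3 x + c3 y).
Definition vsub (x y : pt3) : pt3 := (c1 x - c1 y, c2 x - c2 y, c3 x - c3 y).
Definition vscal (a : R) (x : pt3) : pt3 := (a * c1 x, a * c2 x, a * c3 x).

Definition X3 (x : pt3) : pt3 := (0, 0, 1).

Definition dt (f : R -> R -> R) (t u : R) : R := Derive (fun s => f s u) t.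
Definition du (f : R -> R -> R) (t u : R) : R := Derive (fun v => f t v) u.

Definition C2_at (f : R -> R -> R) (t u : R) : Prop :=
  locally (t, u) (fun p : R * R =>
     ex_derive (fun s => f s (snd p)) (fst p) /\
     ex_derive (fun v => f (fst p) v) (snd p) /\
     ex_derive (fun s => dt f s (snd p)) (fst p) /\
     ex_derive (fun v => dt f (fst p) v) (snd p) /\
     ex_derive (fun s => du f s (snd p)) (fst p) /\
     ex_derive (fun v => du f (fst p) v) (snd p)) /\
  continuous (fun p : R * R => f (fst p) (snd p)) (t, u) /\
  continuous (fun p : R * R => dt f (fst p) (snd p)) (t, u) /\
  continuous (fun p : R * R => du f (fst p) (snd p)) (t, u) /\
  continuous (fun p : R * R => dt (dt f) (fst p) (snd p)) (t, u) /\
  continuous (fun p : R * R => du (dt f) (fst p) (snd p)) (t, u) /\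
  continuous (fun p : R * R => dt (du f) (fst p) (snd p)) (t, u) /\
  continuous (fun p : R * R => du (du f) (fst p) (snd p)) (t, u).

Section Geom.
Variable gamma : R -> R -> pt3.

Definition g1 (t u : R) : R := c1 (gamma t u).
Definition g2 (t u : R) : R := c2 (gamma t u).
Definition g3 (t u : R) : R := c3 (gamma t u).

Definition gamma_t (t u : R) : pt3 := (dt g1 t u, dt g2 t u, dt g3 t u).

Definition norm_gu (t u : R) : R := sqrt ((du g1 t u) ^ 2 + (du g2 t u) ^ 2).

Definition Len (t : R) : R := RInt (fun u => norm_gu t u) 0 1.

Definition horizontal_at (t u : R) : Prop :=
  du g3 t u = - / 2 * g2 t u * du g1 t u + / 2 * g1 t u * du g2 t u.

Definition curv (t u : R) : R :=
  (du (du g2) t u * du g1 t u - du g2 t u * du (du g1) t u) /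
  Rpower ((du g1 t u) ^ 2 + (du g2 t u) ^ 2) (3 / 2).

Definition Nrm (t u : R) : pt3 :=
  vscal (/ norm_gu t u)
    (- du g2 t u, du g1 t u,
     / 2 * g2 t u * du g2 t u + / 2 * g1 t u * du g1 t u).

Definition lam (t : R) : R :=
  - (RInt (fun u => curv t u * norm_gu t u) 0 1) / Len t.

End Geom.

(* Main.v *)
Require Import Defs.
From Stdlib Require Import Reals.
From Coquelicot Require Import Coquelicot.
From Stdlib Require Import Lra.
Open Scope R_scope.

Definition cts2 (F : R -> R -> R) (t u : R) :=
  continuous (fun p : R * R => F (fst p) (snd p)) (t, u).

Lemma cts2_u F t u : cts2 F t u -> continuous (F t) u.
Proof.
  intro H.
  apply (continuous_comp_2 (fun _ : R => t) (fun v : R => v) F u).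
  - apply continuous_const.
  - apply continuous_id.
  - exact H.
Qed.

Lemma cts2_t F t u : cts2 F t u -> continuous (fun s => F s u) t.
Proof.
  intro H.
  apply (continuous_comp_2 (fun s : R => s) (fun _ : R => u) F t).
  - apply continuous_id.
  - apply continuous_const.
  - exact H.
Qed.

Lemma cR_mult {U : UniformSpace} (f g : U -> R) x :
  continuous f x -> continuous g x -> continuous (fun y => f y * g y) x.
Proof. apply (continuous_mult f g x). Qed.
Lemma cR_plus {U : UniformSpace} (f g : U -> R) x :
  continuous f x -> continuous g x -> continuous (fun y => f y + g y) x.
Proof. apply (continuous_plus f g x). Qed.
Lemma cR_opp {U : UniformSpace} (f : U -> R) x :
  continuous f x -> continuous (fun y => - f y) x.
Proof. apply (continuous_opp f x). Qed.
Lemma cR_minus {U : UniformSpace} (f g : U -> R) x :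
  continuous f x -> continuous g x -> continuous (fun y => f y - g y) x.
Proof. intros; apply cR_plus; auto; apply cR_opp; auto. Qed.
Lemma cR_const {U : UniformSpace} (c : R) (x : U) : continuous (fun _ => c) x.
Proof. apply continuous_const. Qed.
Lemma cR_inv {U : UniformSpace} (f : U -> R) x :
  continuous f x -> f x <> 0 -> continuous (fun y => / f y) x.
Proof. intros H1 H2. apply (continuous_comp f Rinv x H1). apply continuous_Rinv; auto. Qed.
Lemma cR_div {U : UniformSpace} (f g : U -> R) x :
  continuous f x -> continuous g x -> g x <> 0 -> continuous (fun y => f y / g y) x.
Proof. intros; unfold Rdiv; apply cR_mult; auto; apply cR_inv; auto. Qed.
Lemma cR_sqrt {U : UniformSpace} (f : U -> R) x :
  continuous f x -> continuous (fun y => sqrt (f y)) x.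
Proof. intros H1. apply (continuous_comp f sqrt x H1). apply continuous_sqrt. Qed.
Lemma cR_pow {U : UniformSpace} (f : U -> R) x n :
  continuous f x -> continuous (fun y => f y ^ n) x.
Proof. intros H; induction n; simpl. apply cR_const. apply cR_mult; auto. Qed.

Lemma cont_pos {U : UniformSpace} (f : U -> R) x :
  continuous f x -> 0 < f x -> locally x (fun y => 0 < f y).
Proof.
  intros Hc Hp. apply (Hc (fun r => 0 < r)).
  exists (mkposreal _ Hp). intros y Hy.
  change (Rabs (y - f x) < f x) in Hy.
  apply Rabs_def2 in Hy. simpl in Hy. lra.
Qed.

Lemma loc_interval t T : 0 < t < T -> locally t (fun y => 0 < y < T).
Proof.
  intros H.
  assert (Hp : 0 < Rmin t (T - t)) by (apply Rmin_glb_lt; lra).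
  exists (mkposreal _ Hp). intros y Hy.
  change (Rabs (y - t) < Rmin t (T - t)) in Hy.
  apply Rabs_def2 in Hy. simpl in Hy.
  pose proof (Rmin_l t (T - t)). pose proof (Rmin_r t (T - t)). lra.
Qed.

Lemma C2_cts f t u : C2_at f t u ->
  cts2 f t u /\ cts2 (dt f) t u /\ cts2 (du f) t u /\ cts2 (dt (dt f)) t u /\
  cts2 (du (dt f)) t u /\ cts2 (dt (du f)) t u /\ cts2 (du (du f)) t u.
Proof. intros [_ H]. exact H. Qed.

Lemma C2_pt f t u : C2_at f t u ->
     ex_derive (fun s => f s u) t /\
     ex_derive (fun v => f t v) u /\
     ex_derive (fun s => dt f s u) t /\
     ex_derive (fun v => dt f t v) u /\
     ex_derive (fun s => du f s u) t /\
     ex_derive (fun v => du f t v) u.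
Proof. intros [H _]. apply locally_singleton in H. exact H. Qed.

Lemma Schwarz_C2 f t u : C2_at f t u -> dt (du f) t u = du (dt f) t u.
Proof.
  intros HC. pose proof (C2_cts f t u HC) as (_ & _ & _ & _ & H5 & H6 & _).
  destruct HC as [HL _].
  unfold dt, du.
  apply (Schwarz f t u).
  - apply locally_2d_locally. eapply filter_imp; [|exact HL].
    intros [x y] (h1 & h2 & h3 & h4 & h5 & h6). simpl in *.
    repeat split; auto.
  - apply continuity_2d_pt_filterlim. exact H6.
  - apply continuity_2d_pt_filterlim. exact H5.
Qed.


Definition Sq gamma t u := du (g1 gamma) t u ^ 2 + du (g2 gamma) t u ^ 2.

Lemma Sq_pos gamma t u : norm_gu gamma t u <> 0 -> 0 < Sq gamma t u.
Proof.
  unfold norm_gu, Sq. intros H.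
  destruct (Rle_lt_or_eq_dec 0 (du (g1 gamma) t u ^ 2 + du (g2 gamma) t u ^ 2)); auto.
  nra. exfalso; apply H; rewrite <- e; apply sqrt_0.
Qed.

Lemma norm_sq gamma t u : norm_gu gamma t u * norm_gu gamma t u = Sq gamma t u.
Proof. unfold norm_gu, Sq. apply sqrt_sqrt. nra. Qed.

Definition Dn gamma s v :=
  (du (g1 gamma) s v * dt (du (g1 gamma)) s v + du (g2 gamma) s v * dt (du (g2 gamma)) s v)
  / norm_gu gamma s v.

Lemma Dn_deriv gamma s v :
  ex_derive (fun z => du (g1 gamma) z v) s -> ex_derive (fun z => du (g2 gamma) z v) s ->
  0 < Sq gamma s v ->
  is_derive (fun z => norm_gu gamma z v) s (Dn gamma s v).
Proof.
  intros H1 H2 H3. unfold Sq in H3. unfold Dn, norm_gu, dt.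
  auto_derive. repeat split; auto.
  set (X := du (g1 gamma) s v) in *. set (Y := du (g2 gamma) s v) in *.
  replace (X * (X * 1) + Y * (Y * 1)) with (X ^ 2 + Y ^ 2) by ring.
  assert (sqrt (X ^ 2 + Y ^ 2) <> 0) by (intro H; apply sqrt_eq_0 in H; nra).
  field. auto.
Qed.

Lemma Sq_cts2 gamma t u : C2_at (g1 gamma) t u -> C2_at (g2 gamma) t u -> cts2 (Sq gamma) t u.
Proof.
  intros A B. apply C2_cts in A. apply C2_cts in B. unfold cts2, Sq.
  apply cR_plus; apply cR_pow; tauto.
Qed.

Lemma norm_cts2 gamma t u : C2_at (g1 gamma) t u -> C2_at (g2 gamma) t u -> cts2 (norm_gu gamma) t u.
Proof.
  intros A B. apply (Sq_cts2 gamma) in A; auto. unfold cts2, norm_gu.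
  apply cR_sqrt. exact A.
Qed.

Lemma Dn_cts2 gamma t u : C2_at (g1 gamma) t u -> C2_at (g2 gamma) t u ->
  norm_gu gamma t u <> 0 -> cts2 (Dn gamma) t u.
Proof.
  intros A B Hn. pose proof (norm_cts2 gamma t u A B) as Hc.
  apply C2_cts in A. apply C2_cts in B. unfold cts2, Dn.
  apply cR_div; [| exact Hc | exact Hn].
  apply cR_plus; apply cR_mult; tauto.
Qed.

Lemma Derive_norm_cts gamma t u : C2_at (g1 gamma) t u -> C2_at (g2 gamma) t u ->
  norm_gu gamma t u <> 0 ->
  continuity_2d_pt (fun s v => Derive (fun z => norm_gu gamma z v) s) t u.
Proof.
  intros A B Hn.
  apply continuity_2d_pt_filterlim.
  apply (continuous_ext_loc (fun p : R * R => Derive (fun z => norm_gu gamma z (snd p)) (fst p)) (fun p : R * R => Dn gamma (fst p) (snd p)) (t, u)).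
  2: apply Dn_cts2; auto.
  pose proof (cont_pos _ _ (Sq_cts2 gamma t u A B) (Sq_pos gamma t u Hn)) as HS.
  destruct A as [LA _]. destruct B as [LB _].
  generalize (filter_and _ _ LA (filter_and _ _ LB HS)).
  apply filter_imp. intros [x y] (a & b & c). simpl in *.
  symmetry. apply is_derive_unique. apply Dn_deriv; tauto.
Qed.


Definition Smooth gamma T := forall t u, 0 <= t < T -> 0 <= u <= 1 ->
  C2_at (g1 gamma) t u /\ C2_at (g2 gamma) t u /\ C2_at (g3 gamma) t u.
Definition NZ gamma T := forall t u, 0 <= t < T -> 0 <= u <= 1 -> norm_gu gamma t u <> 0.

Lemma Rmin01 : Rmin 0 1 = 0. Proof. apply Rmin_left; lra. Qed.
Lemma Rmax01 : Rmax 0 1 = 1. Proof. apply Rmax_right; lra. Qed.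

Lemma Len_ex gamma T (HC : Smooth gamma T) t : 0 <= t < T ->
  ex_RInt (fun u => norm_gu gamma t u) 0 1.
Proof.
  intros Ht. apply (@ex_RInt_continuous R_CompleteNormedModule). rewrite Rmin01, Rmax01. intros z Hz.
  destruct (HC t z Ht Hz) as (A & B & _).
  apply (cts2_u (norm_gu gamma)). apply norm_cts2; auto.
Qed.

Lemma Len_deriv gamma T (HC : Smooth gamma T) (HN : NZ gamma T) t : 0 < t < T ->
  is_derive (Len gamma) t (RInt (fun u => Dn gamma t u) 0 1).
Proof.
  intros Ht. unfold Len.
  assert (E : RInt (fun u => Dn gamma t u) 0 1 =
              RInt (fun u => Derive (fun z => norm_gu gamma z u) t) 0 1).
  { apply RInt_ext. rewrite Rmin01, Rmax01. intros x Hx.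
    destruct (HC t x ltac:(lra) ltac:(lra)) as (A & B & _).
    apply C2_pt in A. apply C2_pt in B.
    symmetry. apply is_derive_unique. apply Dn_deriv; try tauto.
    apply Sq_pos. apply HN; lra. }
  rewrite E.
  apply (is_derive_RInt_param (fun x u => norm_gu gamma x u) 0 1 t).
  - generalize (loc_interval t T Ht). apply filter_imp. intros y Hy u Hu.
    rewrite Rmin01, Rmax01 in Hu.
    destruct (HC y u ltac:(lra) Hu) as (A & B & _).
    apply C2_pt in A. apply C2_pt in B.
    eexists. apply Dn_deriv; try tauto. apply Sq_pos. apply HN; lra.
  - intros u Hu. rewrite Rmin01, Rmax01 in Hu.
    destruct (HC t u ltac:(lra) Hu) as (A & B & _).
    apply Derive_norm_cts; auto. apply HN; lra.
  - generalize (loc_interval t T Ht). apply filter_imp. intros y Hy.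
    apply (Len_ex gamma T HC). lra.
Qed.


Definition hfun gamma t u :=
  (du (g1 gamma) t u * dt (g1 gamma) t u + du (g2 gamma) t u * dt (g2 gamma) t u)
  / norm_gu gamma t u.

Definition hp gamma t u :=
  (du (du (g1 gamma)) t u * dt (g1 gamma) t u + du (g1 gamma) t u * du (dt (g1 gamma)) t u
   + du (du (g2 gamma)) t u * dt (g2 gamma) t u + du (g2 gamma) t u * du (dt (g2 gamma)) t u)
  / norm_gu gamma t u
  - (du (g1 gamma) t u * dt (g1 gamma) t u + du (g2 gamma) t u * dt (g2 gamma) t u)
    * (du (g1 gamma) t u * du (du (g1 gamma)) t u + du (g2 gamma) t u * du (du (g2 gamma)) t u)
    / (norm_gu gamma t u * norm_gu gamma t u * norm_gu gamma t u).

Lemma hp_deriv gamma t u : C2_at (g1 gamma) t u -> C2_at (g2 gamma) t u ->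
  0 < Sq gamma t u -> is_derive (hfun gamma t) u (hp gamma t u).
Proof.
  intros A B HS. apply C2_pt in A. apply C2_pt in B.
  unfold Sq in HS. unfold hfun, hp, norm_gu.
  auto_derive.
  { destruct A as (_&_&_&A4&_&A6). destruct B as (_&_&_&B4&_&B6).
    repeat split; auto; try nra. intro H; apply sqrt_eq_0 in H; nra. }
  change (Derive (fun x => du (g1 gamma) t x) u) with (du (du (g1 gamma)) t u).
  change (Derive (fun x => du (g2 gamma) t x) u) with (du (du (g2 gamma)) t u).
  change (Derive (fun x => dt (g1 gamma) t x) u) with (du (dt (g1 gamma)) t u).
  change (Derive (fun x => dt (g2 gamma) t x) u) with (du (dt (g2 gamma)) t u).
  set (X := du (g1 gamma) t u) in *.
  set (Y := du (g2 gamma) t u) in *.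
  replace (X * (X * 1) + Y * (Y * 1)) with (X ^ 2 + Y ^ 2) by ring.
  assert (Hs : sqrt (X ^ 2 + Y ^ 2) <> 0) by (intro H; apply sqrt_eq_0 in H; nra).
  field. auto.
Qed.

Ltac cts_step := match goal with
  | |- continuous (fun p => _ - _) _ => apply cR_minus
  | |- continuous (fun p => _ + _) _ => apply cR_plus
  | |- continuous (fun p => _ * _) _ => apply cR_mult
  | |- continuous (fun p => - _) _ => apply cR_opp
  | |- continuous (fun p => / _) _ => apply cR_inv
  | |- continuous (fun p => _ ^ _) _ => apply cR_pow
  end.

Lemma hp_cts2 gamma t u : C2_at (g1 gamma) t u -> C2_at (g2 gamma) t u ->
  norm_gu gamma t u <> 0 -> cts2 (hp gamma) t u.
Proof.
  intros A B Hn. pose proof (norm_cts2 gamma t u A B) as Hc.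
  apply C2_cts in A. apply C2_cts in B. unfold cts2, hp. unfold Rdiv.
  repeat cts_step; simpl; try tauto; try exact Hc.
  all: repeat apply Rmult_integral_contrapositive_currified; auto.
Qed.

Lemma dt_end gamma T (P0 : pt3) t w : 0 < t < T ->
  (forall s, 0 <= s < T -> gamma s w = P0) ->
  dt (g1 gamma) t w = 0 /\ dt (g2 gamma) t w = 0.
Proof.
  intros Ht HE. unfold dt, g1, g2.
  split.
  - rewrite (Derive_ext_loc _ (fun _ => Defs.c1 P0)). apply Derive_const.
    generalize (loc_interval t T Ht). apply filter_imp. intros y Hy.
    rewrite HE; auto; lra.
  - rewrite (Derive_ext_loc _ (fun _ => Defs.c2 P0)). apply Derive_const.
    generalize (loc_interval t T Ht). apply filter_imp. intros y Hy.
    rewrite HE; auto; lra.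
Qed.

Lemma RInt_hp gamma T (P0 Q0 : pt3) (HC : Smooth gamma T) (HN : NZ gamma T)
  (HE : forall t, 0 <= t < T -> gamma t 0 = P0 /\ gamma t 1 = Q0) t :
  0 < t < T -> is_RInt (hp gamma t) 0 1 0.
Proof.
  intros Ht.
  assert (H := @is_RInt_derive R_CompleteNormedModule (hfun gamma t) (hp gamma t) 0 1).
  rewrite Rmin01, Rmax01 in H.
  destruct (dt_end gamma T P0 t 0 Ht) as [a0 b0]. intros s Hs; apply HE; auto.
  destruct (dt_end gamma T Q0 t 1 Ht) as [a1 b1]. intros s Hs; apply HE; auto.
  match type of H with _ -> _ -> is_RInt _ _ _ ?m => replace m with 0 in H end.
  apply H.
  - intros x Hx. destruct (HC t x ltac:(lra) Hx) as (A & B & _).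
    apply hp_deriv; auto. apply Sq_pos, HN; lra.
  - intros x Hx. destruct (HC t x ltac:(lra) Hx) as (A & B & _).
    apply (cts2_u (hp gamma)). apply hp_cts2; auto. apply HN; lra.
  - unfold hfun. rewrite a0, b0, a1, b1.
    unfold minus, plus, opp; simpl. unfold Rdiv. ring.
Qed.

Definition Kf gamma t u :=
  (du (du (g2 gamma)) t u * du (g1 gamma) t u - du (g2 gamma) t u * du (du (g1 gamma)) t u)
  / (norm_gu gamma t u ^ 3).

Lemma curv_Kf gamma t u : norm_gu gamma t u <> 0 -> curv gamma t u = Kf gamma t u.
Proof.
  intros Hn. pose proof (Sq_pos gamma t u Hn) as HS.
  unfold curv, Kf. f_equal.
  replace (3 / 2) with (1 + / 2) by field.
  rewrite Rpower_plus, Rpower_1, Rpower_sqrt; auto.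
  fold (Sq gamma t u). change (sqrt (Sq gamma t u)) with (norm_gu gamma t u). rewrite <- norm_sq. ring.
Qed.

Lemma Kf_cts2 gamma t u : C2_at (g1 gamma) t u -> C2_at (g2 gamma) t u ->
  norm_gu gamma t u <> 0 -> cts2 (Kf gamma) t u.
Proof.
  intros A B Hn. pose proof (norm_cts2 gamma t u A B) as Hc.
  apply C2_cts in A. apply C2_cts in B. unfold cts2, Kf. unfold Rdiv.
  repeat cts_step; simpl; try tauto; try exact Hc.
  repeat apply Rmult_integral_contrapositive_currified; auto; lra.
Qed.


Definition Flow gamma T := forall t u, 0 < t < T -> 0 < u < 1 ->
     gamma_t gamma t u =
     vsub (vadd (vscal (curv gamma t u) (Nrm gamma t u))
                (vscal (lam gamma t) (Nrm gamma t u)))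
          (vscal (RInt (fun xi => (curv gamma t xi + lam gamma t) * norm_gu gamma t xi) 0 u)
                 (X3 (gamma t u))).

Lemma key gamma T (HC : Smooth gamma T) (HN : NZ gamma T) (HF : Flow gamma T) t u :
  0 < t < T -> 0 < u < 1 ->
  Dn gamma t u = hp gamma t u - (Kf gamma t u + lam gamma t) * Kf gamma t u * norm_gu gamma t u.
Proof.
  intros Ht Hu.
  destruct (HC t u ltac:(lra) ltac:(lra)) as (A & B & _).
  assert (Hn : norm_gu gamma t u <> 0) by (apply HN; lra).
  pose proof (HF t u Ht Hu) as H.
  pose proof (f_equal Defs.c1 H) as H1. pose proof (f_equal Defs.c2 H) as H2.
  clear H.
  unfold gamma_t, vsub, vadd, vscal, Nrm, X3, Defs.c1, Defs.c2, Defs.c3 in H1, H2; simpl in H1, H2.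
  rewrite curv_Kf in H1, H2 by auto.
  unfold Dn, hp. rewrite (Schwarz_C2 (g1 gamma)), (Schwarz_C2 (g2 gamma)) by auto.
  rewrite H1, H2. unfold Kf.
  unfold Defs.c1, Defs.c2, Defs.c3; simpl. field. auto.
Qed.

Ltac cts_step2 := match goal with
  | |- continuous (fun p => _ - _) _ => apply cR_minus
  | |- continuous (fun p => _ + _) _ => apply cR_plus
  | |- continuous (fun p => _ * _) _ => apply cR_mult
  | |- continuous (fun p => - _) _ => apply cR_opp
  | |- continuous (fun p => _ ^ _) _ => apply cR_pow
  | |- continuous (fun p => ?c) _ => apply cR_const
  end.

Lemma deriv_nonpos gamma T (P0 Q0 : pt3) (HC : Smooth gamma T) (HN : NZ gamma T) (HF : Flow gamma T)
  (HE : forall t, 0 <= t < T -> gamma t 0 = P0 /\ gamma t 1 = Q0) t :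
  0 < t < T -> RInt (Dn gamma t) 0 1 <= 0.
Proof.
  intros Ht.
  set (l := lam gamma t).
  assert (cK : forall u, 0 <= u <= 1 -> continuous (fun v => Kf gamma t v) u).
  { intros u Hu. destruct (HC t u ltac:(lra) Hu) as (A & B & _).
    apply (cts2_u (Kf gamma)). apply Kf_cts2; auto. apply HN; lra. }
  assert (cn : forall u, 0 <= u <= 1 -> continuous (fun v => norm_gu gamma t v) u).
  { intros u Hu. destruct (HC t u ltac:(lra) Hu) as (A & B & _).
    apply (cts2_u (norm_gu gamma)). apply norm_cts2; auto. }
  assert (EX : forall f : R -> R, (forall u, 0 <= u <= 1 -> continuous f u) -> ex_RInt f 0 1).
  { intros f Hf. apply (@ex_RInt_continuous R_CompleteNormedModule). rewrite Rmin01, Rmax01. auto. }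
  assert (Ehp := RInt_hp gamma T P0 Q0 HC HN HE t Ht).
  assert (E1 : RInt (Dn gamma t) 0 1 =
     RInt (fun u => hp gamma t u - (Kf gamma t u + l) * Kf gamma t u * norm_gu gamma t u) 0 1).
  { apply RInt_ext. rewrite Rmin01, Rmax01. intros x Hx. apply (key gamma T); auto. }
  assert (XK : ex_RInt (fun u => (Kf gamma t u + l) * Kf gamma t u * norm_gu gamma t u) 0 1).
  { apply EX. intros u Hu. repeat cts_step2; auto. }
  rewrite E1.
  rewrite (RInt_minus (V := R_CompleteNormedModule) (hp gamma t)
            (fun u => (Kf gamma t u + l) * Kf gamma t u * norm_gu gamma t u)); [| exists 0; exact Ehp | exact XK].
  rewrite (is_RInt_unique _ _ _ _ Ehp).
  set (X := RInt (fun u => (Kf gamma t u + l) * Kf gamma t u * norm_gu gamma t u) 0 1).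
  assert (HX : 0 <= X).
  { assert (J1 := RInt_correct (fun u => (Kf gamma t u + l) ^ 2 * norm_gu gamma t u) 0 1
                 ltac:(apply EX; intros u Hu; repeat cts_step2; auto)).
    assert (Jk := RInt_correct (fun u => Kf gamma t u * norm_gu gamma t u) 0 1
                 ltac:(apply EX; intros u Hu; repeat cts_step2; auto)).
    assert (JL := RInt_correct (fun u => norm_gu gamma t u) 0 1
                 ltac:(apply EX; intros u Hu; auto)).
    set (I1 := RInt (fun u => (Kf gamma t u + l) ^ 2 * norm_gu gamma t u) 0 1) in *.
    set (Ik := RInt (fun u => Kf gamma t u * norm_gu gamma t u) 0 1) in *.
    set (L := RInt (fun u => norm_gu gamma t u) 0 1) in *.
    assert (Jraw := is_RInt_minus _ _ _ _ _ _ J1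
                      (is_RInt_scal _ _ _ l _ (is_RInt_plus _ _ _ _ _ _ Jk (is_RInt_scal _ _ _ l _ JL)))).
    assert (EX1 : X = I1 - l * (Ik + l * L)).
    { unfold X. apply is_RInt_unique.
      replace (I1 - l * (Ik + l * L)) with (minus I1 (scal l (plus Ik (scal l L)))).
      eapply is_RInt_ext; [| exact Jraw].
      intros x _. unfold minus, plus, scal, opp, mult; simpl. unfold mult; simpl. ring.
      unfold minus, plus, scal, opp, mult; simpl. unfold mult; simpl. ring. }
    assert (Hl : l * (Ik + l * L) = 0).
    { assert (El : l = - Ik / L).
      { unfold l, lam, Len. fold L. f_equal. f_equal. unfold Ik.
        apply RInt_ext. rewrite Rmin01, Rmax01. intros x Hx.
        rewrite curv_Kf; auto. apply HN; lra. }
      destruct (Req_dec L 0) as [HL0 | HL0].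
      - rewrite El, HL0. unfold Rdiv. rewrite Rinv_0. ring.
      - rewrite El. field. auto. }
    rewrite EX1, Hl. rewrite Rminus_0_r.
    unfold I1. apply RInt_ge_0. lra. exists I1; exact J1.
    intros x Hx. apply Rmult_le_pos. apply pow2_ge_0. apply sqrt_pos. }
  unfold minus, plus, opp; simpl. lra.
Qed.


Lemma Len_rcont gamma T (HC : Smooth gamma T) (HT : 0 < T) (eps : posreal) :
  exists d : posreal, forall s, 0 <= s <= d -> s < T -> Rabs (Len gamma s - Len gamma 0) <= eps.
Proof.
  destruct (uniform_continuity_2d_1d' (norm_gu gamma) 0 1 0) with (eps := eps) as [d Hd].
  { intros x Hx. apply continuity_2d_pt_filterlim.
    destruct (HC 0 x ltac:(lra) Hx) as (A & B & _). apply norm_cts2; auto. }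
  exists d. intros s Hs HsT.
  unfold Len.
  rewrite <- (RInt_minus (V := R_CompleteNormedModule)).
  2: apply (Len_ex gamma T HC); lra.
  2: apply (Len_ex gamma T HC); lra.
  replace (pos eps) with ((1 - 0) * eps) by ring.
  apply abs_RInt_le_const. lra.
  apply (ex_RInt_minus (V := R_CompleteNormedModule)); apply (Len_ex gamma T HC); lra.
  intros u Hu. left.
  pose proof (cond_pos d).
  apply (Hd u 0 u s); try lra.
  rewrite Rminus_diag, Rabs_R0. apply cond_pos.
Qed.

Lemma Len_mono_pos gamma T (P0 Q0 : pt3) (HC : Smooth gamma T) (HN : NZ gamma T) (HF : Flow gamma T)
  (HE : forall t, 0 <= t < T -> gamma t 0 = P0 /\ gamma t 1 = Q0) t1 t2 :
  0 < t1 -> t1 <= t2 -> t2 < T -> Len gamma t2 <= Len gamma t1.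
Proof.
  intros H1 H2 H3.
  destruct (MVT_gen (Len gamma) t1 t2 (fun x => RInt (Dn gamma x) 0 1)) as (c & Hc & Heq).
  - intros x Hx. rewrite Rmin_left, Rmax_right in Hx by lra.
    apply (Len_deriv gamma T HC HN). lra.
  - intros x Hx. rewrite Rmin_left, Rmax_right in Hx by lra.
    apply continuity_pt_filterlim. apply (ex_derive_continuous (Len gamma)).
    eexists. apply (Len_deriv gamma T HC HN). lra.
  - rewrite Rmin_left, Rmax_right in Hc by lra.
    assert (RInt (Dn gamma c) 0 1 <= 0) by (apply (deriv_nonpos gamma T P0 Q0); auto; lra).
    assert (RInt (Dn gamma c) 0 1 * (t2 - t1) <= 0).
    { apply Rmult_le_0_r; lra. }
    lra.
Qed.


Theorem lemmaB3 (P Q : pt3) (T : R) (gamma : R -> R -> pt3) :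
  P <> Q ->
  (* sufficiently smooth: each component is C^2 (up to the boundary)
     on [0,T) x [0,1] *)
  (forall t u, 0 <= t < T -> 0 <= u <= 1 ->
     C2_at (g1 gamma) t u /\ C2_at (g2 gamma) t u /\ C2_at (g3 gamma) t u) ->
  (* |gamma_u|_g <> 0 everywhere *)
  (forall t u, 0 <= t < T -> 0 <= u <= 1 -> norm_gu gamma t u <> 0) ->
  (* gamma(0,.) is a regular horizontal curve from P to Q *)
  (forall u, 0 <= u <= 1 -> horizontal_at gamma 0 u) ->
  gamma 0 0 = P -> gamma 0 1 = Q ->
  (* fixed endpoints *)
  (forall t, 0 <= t < T -> gamma t 0 = P /\ gamma t 1 = Q) ->
  (* the flow *)
  (forall t u, 0 < t < T -> 0 < u < 1 ->
     gamma_t gamma t u =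
     vsub (vadd (vscal (curv gamma t u) (Nrm gamma t u))
                (vscal (lam gamma t) (Nrm gamma t u)))
          (vscal (RInt (fun xi => (curv gamma t xi + lam gamma t) * norm_gu gamma t xi) 0 u)
                 (X3 (gamma t u)))) ->
  forall t1 t2, 0 <= t1 -> t1 <= t2 -> t2 < T ->
    Len gamma t2 <= Len gamma t1.
Proof.
  intros HPQ HC HN Hhor H0 H1 HE HF t1 t2 Ht1 Ht12 Ht2.
  destruct (Rle_lt_or_eq_dec 0 t1 Ht1) as [Hpos | Heq].
  - apply (Len_mono_pos gamma T P Q); auto.
  - subst t1. destruct (Rle_lt_or_eq_dec 0 t2 Ht12) as [Hp2 | E2]; [| subst; lra].
    apply Rnot_lt_le; intro Hlt.
    assert (He : 0 < (Len gamma t2 - Len gamma 0) / 2) by lra.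
    destruct (Len_rcont gamma T HC ltac:(lra) (mkposreal _ He)) as [d Hd].
    pose proof (cond_pos d).
    set (s := Rmin d t2 / 2).
    assert (Hm : 0 < Rmin d t2) by (apply Rmin_glb_lt; lra).
    assert (Hs1 : 0 < s) by (unfold s; lra).
    assert (Hs2 : s <= d) by (unfold s; pose proof (Rmin_l d t2); lra).
    assert (Hs3 : s <= t2) by (unfold s; pose proof (Rmin_r d t2); lra).
    specialize (Hd s ltac:(lra) ltac:(lra)). simpl in Hd.
    pose proof (Len_mono_pos gamma T P Q HC HN HF HE s t2 Hs1 Hs3 Ht2).
    apply Rabs_le_between in Hd. lra.
Qed.
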